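(* Let $G$ be an undirected graph with non-negative edge weights, cellularly embedded on a compact connected orientable surface $\Sigma$ with at least one boundary component, and let $\overline{G}$ be its $\mathbb{Z}_2$-homology cover. Let $\gamma$ be a $\mathbb{Z}_2$-minimal cycle in $G$, and let $\sigma$ be any shortest path in $G$ that intersects $\gamma$. Then there is a $\mathbb{Z}_2$-minimal cycle $\gamma'$ homologous to $\gamma$ which is the projection of a shortest path $(\gamma',h)$ in $\overline{G}$ that starts with a subpath of $(\sigma,0)$ but does not otherwise intersect $(\sigma,0)$.
   Context: Cellular embedding: every face is an open disk. $\beta=2g+b-1$. Fix a tree-coforest decomposition $(T,L,F)$ ($T$ a spanning tree of $G$; $F^*$ a spanning forest of the dual graph $G^*$, whose vertices are faces and boundary cycles, with each component containing exactly one dual boundary vertex; $L=\{e_1,\dots,e_\beta\}$ the rest); adding $e_i^*$ to $F^*$ creates a dual path $\alpha_i$, and the signature $[e]\in\mathbb{Z}_2^\beta$ of edge $e$ has $i$th bit $1$ iff $\alpha_i$ traverses $e^*$ an odd number of times; the signature of a walk is the XOR of the signatures of its edges with multiplicity. The cover $\overline{G}$ has vertices $V\times\mathbb{Z}_2^\beta$ and, for each edge $uv$ and $h$, an edge $(u,h)\to(v,h\oplus[uv])$ with the weight of $uv$; projection $\pi(v,h)=v$. For a path $p$ in $G$ from $u$ to $v$ and $h\in\mathbb{Z}_2^\beta$, $(p,h)$ denotes its unique lift starting at $(u,h)$ (ending at $(v,h\oplus[p])$). A cycle is a closed walk; its length counts edge weights with multiplicity. Two cycles are $\mathbb{Z}_2$-homologous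 if the edge sets each traverses an odd number of times differ by a boundary subgraph (the set of edges with exactly one side in some fixed subset of faces); a cycle is $\mathbb{Z}_2$-minimal if it is a shortest cycle in its homology class. *)

(* Defs.v *)
From HB Require Import structures.
From mathcomp Require Import all_boot all_order all_algebra.
From mathcomp Require Import reals.
Set Implicit Arguments. Unset Strict Implicit. Unset Printing Implicit Defensive.
Import Order.TTheory GRing.Theory Num.Theory.

(* Combinatorial maps: cellular embeddings of graphs on compact orientable    *)
(* surfaces with boundary.  A graph is given by darts (half-edges); [alpha]   *)
(* is the fixed-point-free edge involution, [rot] the rotation around each    *)
(* vertex.  Faces are orbits of [phi d := rot (alpha d)].  Some faces are      *)
(* marked [bnd]: these are the boundary cycles (the holes of the surface).    *)
(* Every rotation system encodes a cellular embedding in an orientable        *)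
(* surface; removing the open disks of the marked faces gives the surface     *)
(* with boundary.                                                             *)

Record cmap := CMap {
  cV : finType;
  cE : finType;
  cD : finType;
  tail : cD -> cV;
  edge : cD -> cE;
  alpha : cD -> cD;
  rot : cD -> cD;
  bnd : pred cD
}.

Section CMapDefs.
Variable m : cmap.
Local Notation V := (cV m).
Local Notation E := (cE m).
Local Notation D := (cD m).

Definition dhead (d : D) : V := tail (alpha d).
Definition phi (d : D) : D := rot (alpha d).

(* Well-formedness: a cellular embedding of a connected graph in a compact  *)
(* connected orientable surface with at least one boundary component.       *)
Definition wf_cmap : Prop :=
  (forall d : D, alpha (alpha d) = d) /\
  (forall d : D, alpha d != d) /\
  injective (@rot m) /\
  (forall d d' : D, edge d = edge d' <-> (d' = d \/ d' = alpha d)) /\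
  (forall e : E, exists d, edge d = e) /\
  (forall d d', tail d = tail d' <-> fconnect (@rot m) d d') /\
  (forall v : V, exists d, tail d = v) /\
  (forall d, bnd (phi d) = bnd d) /\
  (exists d : D, bnd d) /\
  (forall d d' : D, connect (fun a b : D => (alpha a == b) || (rot a == b)) d d').

Section Walks.
Variables (A W : eqType) (src tgt : A -> W).
Fixpoint walk (x : W) (s : seq A) (y : W) : bool :=
  match s with
  | [::] => x == y
  | a :: s' => (src a == x) && walk (tgt a) s' y
  end.
Definition verts (x : W) (s : seq A) : seq W := x :: map tgt s.
End Walks.

Local Open Scope ring_scope.
Variable R : realType.
Variable w : E -> R.

Definition len (s : seq D) : R := \sum_(d <- s) w (edge d).

Definition is_cycle (u : V) (s : seq D) : bool := walk (@tail m) dhead u s u.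

Definition is_path (x : V) (s : seq D) (y : V) : bool :=
  walk (@tail m) dhead x s y && uniq (verts dhead x s).

Definition shortest_path (x : V) (s : seq D) (y : V) : Prop :=
  is_path x s y /\ forall s', walk (@tail m) dhead x s' y -> len s <= len s'.

Definition symd (A B : {set E}) : {set E} := (A :\: B) :|: (B :\: A).

Definition odd_edges (s : seq D) : {set E} :=
  [set e | odd (count (fun d => edge d == e) s)].

(* a set of (non-boundary) faces is a phi-closed set of darts avoiding bnd *)
Definition boundary_subgraph (C : {set E}) : Prop :=
  exists X : {set D},
    [/\ (forall d, (phi d \in X) = (d \in X)),
        (forall d, d \in X -> ~~ bnd d) &
        C = [set e | [exists d, (edge d == e) && ((d \in X) != (alpha d \in X))]]].

Definition homologous (s1 s2 : seq D) : Prop :=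
  boundary_subgraph (symd (odd_edges s1) (odd_edges s2)).

Definition Z2_minimal (u : V) (s : seq D) : Prop :=
  is_cycle u s /\
  forall u' s', is_cycle u' s' -> homologous s s' -> len s <= len s'.

Definition primal_rel (T : {set E}) : rel D :=
  fun a b => (rot a == b) || ((alpha a == b) && (edge a \in T)).

Definition spanning_tree (T : {set E}) : Prop :=
  (forall d d', connect (primal_rel T) d d') /\
  (forall d, edge d \in T -> ~~ connect (primal_rel (T :\ edge d)) d (alpha d)).

(* dual graph: darts in the same face are identified (phi), dual edge e*   *)
(* joins the faces of the two darts of e *)
Definition dual_rel (F : {set E}) : rel D :=
  fun a b => (phi a == b) || ((alpha a == b) && (edge a \in F)).

Definition reach_bnd (F : {set E}) (d : D) : bool :=
  [exists d', bnd d' && connect (dual_rel F) d d'].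

(* F* is a spanning forest of G* each of whose components contains exactly *)
(* one dual boundary vertex                                                 *)
Definition dual_forest (F : {set E}) : Prop :=
  [/\ (forall d, reach_bnd F d),
      (forall d, edge d \in F -> ~~ connect (dual_rel (F :\ edge d)) d (alpha d)) &
      (forall d d', bnd d -> bnd d' -> connect (dual_rel F) d d' ->
         fconnect phi d d')].

Definition tree_coforest (T F : {set E}) : Prop :=
  [/\ spanning_tree T, dual_forest F & T :&: F = set0].

Definition Lset (T F : {set E}) : {set E} := ~: (T :|: F).

(* edges whose duals lie on the F*-path from the face of d to the boundary *)
(* vertex of its component *)
Definition rootpath (F : {set E}) (d : D) : {set E} :=
  [set e in F | ~~ reach_bnd (F :\ e) d].

(* edges whose duals lie on alpha_i, where e_i = edge d: the dual path     *)
(* created by adding e_i* to F* *)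
Definition dual_path (F : {set E}) (d : D) : {set E} :=
  [set e | (e == edge d) (+) (e \in rootpath F d) (+) (e \in rootpath F (alpha d))].

(* signature [e], as the set of indices l in L whose bit is 1 *)
Definition signature (T F : {set E}) (e : E) : {set E} :=
  [set l in Lset T F | [exists d, (edge d == l) && (e \in dual_path F d)]].

(* vertices V * {set E} (labels are subsets of L), arcs (d, h) from         *)
(* (tail d, h) to (dhead d, h xor [edge d]) of weight w (edge d)             *)
Section Cover.
Variables T F : {set E}.
Definition csrc (a : D * {set E}) : V * {set E} := (tail a.1, a.2).
Definition ctgt (a : D * {set E}) : V * {set E} :=
  (dhead a.1, symd a.2 (signature T F (edge a.1))).
Definition clen (s : seq (D * {set E})) : R := \sum_(a <- s) w (edge a.1).

Definition cshortest_path (x : V * {set E}) (s : seq (D * {set E})) (y : V * {set E}) : Prop :=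
  [/\ walk csrc ctgt x s y, uniq (verts ctgt x s) &
      forall s', walk csrc ctgt x s' y -> clen s <= clen s'].

Fixpoint cover_lift (h : {set E}) (s : seq D) : seq (D * {set E}) :=
  match s with
  | [::] => [::]
  | d :: s' => (d, h) :: cover_lift (symd h (signature T F (edge d))) s'
  end.

Definition starts_with_subpath_only (sx : V * {set E}) (ss : seq (D * {set E}))
    (x : V * {set E}) (s : seq (D * {set E})) : Prop :=
  x \in verts ctgt sx ss /\
  exists a b, [/\ s = a ++ b, infix a ss &
                  all (fun z => z \notin verts ctgt sx ss) (map ctgt b)].
End Cover.

End CMapDefs.

(* Main.v *)
Require Import Defs.
From HB Require Import structures.
From mathcomp Require Import all_boot all_order all_algebra.
From mathcomp Require Import reals.
From mathcomp Require Import zify.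
Import Order.TTheory GRing.Theory Num.Theory.
Set Implicit Arguments. Unset Strict Implicit. Unset Printing Implicit Defensive.

Section GenWalk.
Variables (A W : eqType) (src tgt : A -> W).
Local Notation walk := (walk src tgt).
Local Notation verts := (verts tgt).

Lemma walk_cat x s1 s2 y :
  walk x (s1 ++ s2) y = walk x s1 (last x (map tgt s1)) && walk (last x (map tgt s1)) s2 y.
Proof.
elim: s1 x => [|a s1 IH] x /=; first by rewrite eqxx.
by rewrite IH andbA.
Qed.

Lemma walk_last x s y : walk x s y -> y = last x (map tgt s).
Proof.
elim: s x => [|a s IH] x /=; first by move/eqP.
by case/andP=> _ /IH.
Qed.

Lemma walk_catP x s1 z s2 y : walk x s1 z -> walk z s2 y -> walk x (s1 ++ s2) y.
Proof. by move=> h1 h2; rewrite walk_cat -(walk_last h1) h1. Qed.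

Lemma last_take_verts x s i : i <= size s ->
  last x (map tgt (take i s)) = nth x (verts x s) i.
Proof.
elim: s x i => [|a s IH] x [|i] //= Hi.
rewrite IH //; apply: set_nth_default; by rewrite /= size_map ltnS.
Qed.

Lemma walk_take_drop x s y i : walk x s y -> i <= size s ->
  walk x (take i s) (nth x (verts x s) i) /\ walk (nth x (verts x s) i) (drop i s) y.
Proof.
move=> H Hi; move: H; rewrite -{1}(cat_take_drop i s) walk_cat last_take_verts //.
by case/andP.
Qed.

Lemma verts_drop x s i : i <= size s ->
  verts (nth x (verts x s) i) (drop i s) = drop i (verts x s).
Proof.
elim: s x i => [|a s IH] x [|i] //= Hi.
rewrite -IH //; congr (Defs.verts _ _ _); apply: set_nth_default; by rewrite /= size_map ltnS.
Qed.

Lemma verts_take x s n : verts x (take n s) = take n.+1 (verts x s).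
Proof. by rewrite /Defs.verts /= map_take. Qed.

Lemma mem_verts_nth x s i : i < size (verts x s) -> nth x (verts x s) i \in verts x s.
Proof. exact: mem_nth. Qed.

Lemma shortcut x s y : walk x s y ->
  exists s', [/\ walk x s' y, uniq (verts x s') & subseq s' s].
Proof.
elim: {s}(size s) {-2}s (leqnn (size s)) x y => [|n IH] s Hs x y Hw.
  by move: Hs Hw; rewrite leqn0 => /nilP -> Hw; exists [::].
case Hu: (uniq (verts x s)); first by exists s; rewrite subseq_refl.
move/negbT: Hu => /(uniqPn x) [i [j [Hij Hj Heq]]].
have Hjs : j <= size s by move: Hj; rewrite /Defs.verts /= size_map.
have Hi : i <= size s by apply: leq_trans (ltnW Hij) Hjs.
have [w1 _] := walk_take_drop Hw Hi.
have [_ w2] := walk_take_drop Hw Hjs.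
have Hw' : walk x (take i s ++ drop j s) y by apply: walk_catP w1 _; rewrite Heq.
have Hsz : size (take i s ++ drop j s) <= n.
  rewrite size_cat size_takel // size_drop; lia.
have [s' [w' u' sub']] := IH _ Hsz _ _ Hw'.
exists s'; split => //; apply: subseq_trans sub' _.
rewrite -{3}(cat_take_drop i s) cat_subseq ?subseq_refl //.
rewrite -(subnK (ltnW Hij)) -drop_drop. exact: drop_subseq.
Qed.


Lemma verts_cat x s1 s2 : verts x (s1 ++ s2) = verts x s1 ++ map tgt s2.
Proof. by rewrite /Defs.verts map_cat. Qed.

Lemma last_in_verts x s : last x (map tgt s) \in verts x s.
Proof. exact: mem_last. Qed.

Lemma rotate x s v : walk x s x -> v \in verts x s ->
  exists s', [/\ walk v s' v, perm_eq s s' & forall z, z \in verts v s' -> z \in verts x s].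
Proof.
move=> Hw Hv; set n := index v (verts x s).
have Hn : n <= size s by move: Hv; rewrite -index_mem /Defs.verts /= size_map ltnS.
have Hnv : nth x (verts x s) n = v by rewrite nth_index.
have [w1 w2] := walk_take_drop Hw Hn; rewrite Hnv in w1 w2.
exists (drop n s ++ take n s); split.
- exact: walk_catP w2 w1.
- by rewrite -{1}(cat_take_drop n s) perm_catC.
- move=> z; rewrite in_cons => /orP[/eqP ->|] //.
  have pm : perm_eq (map tgt s) (map tgt (drop n s ++ take n s)).
    by apply: perm_map; rewrite -{1}(cat_take_drop n s) perm_catC.
  by rewrite -(perm_mem pm) => zin; rewrite in_cons zin orbT.
Qed.

Lemma split_last (q : pred W) x s : exists s1 s2,
  [/\ s = s1 ++ s2, all (predC q) (map tgt s2) & (s1 = [::] \/ q (last x (map tgt s1)))].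
Proof.
elim: s x => [|a s IH] x; first by exists [::], [::]; split=> //; left.
have [s1 [s2 [E1 A2 H1]]] := IH (tgt a).
case: H1 => [E0|Hq].
  case qa: (q (tgt a)).
    by exists [:: a], s2; split=> //=; [rewrite E1 E0 | right].
  exists [::], (a :: s); split=> //=; last by left.
  by rewrite qa /= E1 E0.
by exists (a :: s1), s2; split=> //=; [rewrite E1 | right].
Qed.

End GenWalk.

Lemma conn_sym_step (T : finType) (e : rel T) :
  (forall a b, e a b -> connect e b a) -> forall a b, connect e a b -> connect e b a.
Proof.
move=> st a _ /connectP[p pth ->].
elim: p a pth => [|c p IH] a /=; first by rewrite connect0.
case/andP=> eac /IH h; apply: connect_trans h _; exact: st.
Qed.

Lemma andb_xorr (b : bool) (I : Type) (r : seq I) (P : pred I) (F : I -> bool) :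
  b && \big[addb/false]_(i <- r | P i) F i = \big[addb/false]_(i <- r | P i) (b && F i).
Proof. by case: b => //=; rewrite big1. Qed.

Lemma xor_pred1 (E : finType) (j : E) (Z : E -> bool) :
  \big[addb/false]_(e : E) ((e == j) && Z e) = Z j.
Proof. by rewrite (bigD1 j) //= eqxx big1 ?addbF // => e /negbTE ->. Qed.

Lemma in_symd (m : cmap) (A B : {set cE m}) x : (x \in symd A B) = (x \in A) (+) (x \in B).
Proof. by rewrite /symd !inE; case: (x \in A); case: (x \in B). Qed.

Section CM.
Variable m : cmap.
Hypothesis wf : wf_cmap m.
Local Notation D := (cD m).
Local Notation V := (cV m).
Local Notation E := (cE m).

Lemma alphaK (d : D) : alpha (alpha d) = d.
Proof. by case: wf. Qed.
Lemma alpha_neq (d : D) : alpha d != d.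
Proof. by case: wf => _ []. Qed.
Lemma rot_inj : injective (@Defs.rot m).
Proof. by case: wf => _ [] _ []. Qed.
Lemma edge_eq (d d' : D) : edge d = edge d' -> d' = d \/ d' = alpha d.
Proof. by case: wf => _ [] _ [] _ [] /(_ d d') [+ _]. Qed.
Lemma edge_alpha (d : D) : edge (alpha d) = edge d.
Proof. by case: wf => _ [] _ [] _ [] /(_ d (alpha d)) [_ ->]; last right. Qed.
Lemma ex_edge (e : E) : exists d : D, edge d == e.
Proof. by case: wf => _ [] _ [] _ [] _ [] /(_ e) [d <-]; exists d. Qed.
Lemma tail_iff (d d' : D) : tail d = tail d' <-> fconnect (@Defs.rot m) d d'.
Proof. by case: wf => _ [] _ [] _ [] _ [] _ []. Qed.
Lemma tail_rot (d : D) : tail (Defs.rot d) = tail d.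
Proof. by apply/esym/tail_iff; exact: fconnect1. Qed.
Lemma bnd_phi (d : D) : bnd (phi d) = bnd d.
Proof. by case: wf => _ [] _ [] _ [] _ [] _ [] _ [] _ []. Qed.
Lemma phi_inj : injective (@phi m).
Proof.
move=> a b /rot_inj H; by rewrite -(alphaK a) H alphaK.
Qed.

Definition rep (e : E) : D := xchoose (ex_edge e).
Lemma repP e : edge (rep e) = e.
Proof. exact/eqP/(xchooseP (ex_edge e)). Qed.
Lemma rep_edge (a : D) : rep (edge a) = a \/ rep (edge a) = alpha a.
Proof. by apply: edge_eq; rewrite repP. Qed.
Lemma rep_inv (G : D -> bool) : (forall a, G (alpha a) = G a) -> forall a, G (rep (edge a)) = G a.
Proof. by move=> H a; case: (rep_edge a) => ->. Qed.

Definition cr (S : D -> bool) (x : D) := S x (+) S (alpha x).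
Lemma cr_alpha S x : cr S (alpha x) = cr S x.
Proof. by rewrite /cr alphaK addbC. Qed.

Lemma exists_edge (P : D -> bool) : (forall a, P (alpha a) = P a) ->
  forall e, [exists d, (edge d == e) && P d] = P (rep e).
Proof.
move=> HP e; apply/existsP/idP => [[d /andP[/eqP <- Pd]]|Pr].
  by rewrite (rep_inv HP).
by exists (rep e); rewrite repP eqxx.
Qed.

Lemma partition_xor (G : D -> bool) :
  \big[addb/false]_(a : D) G a = \big[addb/false]_(e : E) (G (rep e) (+) G (alpha (rep e))).
Proof.
rewrite (partition_big (@edge m) xpredT) //; apply: eq_bigr => e _.
rewrite (bigD1 (rep e)) /= ?repP ?eqxx //.
rewrite (bigD1 (alpha (rep e))) /=; last by rewrite edge_alpha repP eqxx alpha_neq.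
rewrite big1 ?addbF // => a /andP[/andP[/eqP ea na1] na2].
have: edge (rep e) = edge a by rewrite ea repP.
by case/edge_eq => E1; [rewrite E1 eqxx in na1 | rewrite E1 eqxx in na2].
Qed.

Lemma cross_even (S Y : D -> bool) :
  (forall a, S (Defs.rot a) = S a) -> (forall a, Y (phi a) = Y a) ->
  \big[addb/false]_(e : E) (cr S (rep e) && cr Y (rep e)) = false.
Proof.
move=> HS HY.
have H1 : \big[addb/false]_(a : D) (Y a && cr S a) = false.
  have -> : \big[addb/false]_(a : D) (Y a && cr S a) =
      \big[addb/false]_(a : D) ((Y a && S a) (+) (Y a && S (phi a))).
    by apply: eq_bigr => a _; rewrite /cr /phi HS andb_addr.
  rewrite big_split /=.
  have -> : \big[addb/false]_(a : D) (Y a && S (phi a)) = \big[addb/false]_(a : D) (Y a && S a).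
    rewrite [RHS](reindex_inj phi_inj) /=; apply: eq_big => [a|a _] //; by rewrite HY.
  by rewrite addbb.
rewrite partition_xor in H1; rewrite -[RHS]H1; apply: eq_bigr => e _.
rewrite cr_alpha /cr; by case: (S _); case: (S _); case: (Y _); case: (Y _).
Qed.

Lemma phi_back (a : D) : fconnect (@phi m) (phi a) a.
Proof. by rewrite fconnect_sym ?fconnect1 //; exact: phi_inj. Qed.
Lemma rot_back (a : D) : fconnect (@Defs.rot m) (Defs.rot a) a.
Proof. by rewrite fconnect_sym ?fconnect1 //; exact: rot_inj. Qed.

Lemma dual_step_back G (a b : D) : dual_rel G a b -> connect (dual_rel G) b a.
Proof.
case/orP => [/eqP <-|/andP[/eqP <- eG]].
  apply: connect_sub (phi_back a) => x y /eqP <-; apply: connect1; by rewrite /dual_rel eqxx.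
by apply: connect1; rewrite /dual_rel alphaK eqxx edge_alpha eG orbT.
Qed.
Lemma dual_sym G (a b : D) : connect (dual_rel G) a b -> connect (dual_rel G) b a.
Proof. apply: conn_sym_step => x y; exact: dual_step_back. Qed.

Lemma primal_step_back G (a b : D) : primal_rel G a b -> connect (primal_rel G) b a.
Proof.
case/orP => [/eqP <-|/andP[/eqP <- eG]].
  apply: connect_sub (rot_back a) => x y /eqP <-; apply: connect1; by rewrite /primal_rel eqxx.
by apply: connect1; rewrite /primal_rel alphaK eqxx edge_alpha eG orbT.
Qed.
Lemma primal_sym G (a b : D) : connect (primal_rel G) a b -> connect (primal_rel G) b a.
Proof. apply: conn_sym_step => x y; exact: primal_step_back. Qed.

Lemma dual_mono (G G' : {set E}) a b : G \subset G' ->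
  connect (dual_rel G) a b -> connect (dual_rel G') a b.
Proof.
move=> sG; apply: connect_sub => x y /orP[H|/andP[H1 H2]]; apply: connect1.
  by rewrite /dual_rel H.
by rewrite /dual_rel H1 (subsetP sG _ H2) orbT.
Qed.

Lemma reach_conn G (a b : D) : connect (dual_rel G) a b -> reach_bnd G b -> reach_bnd G a.
Proof.
move=> ab /existsP[d /andP[bd bc]]; apply/existsP; exists d; rewrite bd /=.
exact: connect_trans ab bc.
Qed.

Lemma reach_phi G (x : D) : reach_bnd G (phi x) = reach_bnd G x.
Proof.
apply/idP/idP; apply: reach_conn.
  by apply: connect1; rewrite /dual_rel eqxx.
by apply: dual_sym; apply: connect1; rewrite /dual_rel eqxx.
Qed.

Lemma reach_bnd_self G (x : D) : bnd x -> reach_bnd G x.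
Proof. by move=> bx; apply/existsP; exists x; rewrite bx connect0. Qed.

End CM.

Section LA.
Variable m : cmap.
Hypothesis wf : wf_cmap m.
Local Notation D := (cD m).
Local Notation V := (cV m).
Local Notation E := (cE m).
Variables T F : {set E}.
Hypothesis tc : tree_coforest T F.

Definition inY (f : E) (x : D) := ~~ reach_bnd (F :\ f) x.
Lemma inY_phi f x : inY f (phi x) = inY f x.
Proof. by rewrite /inY (reach_phi wf). Qed.

Lemma FF1 f d : edge d \in F -> edge d != f -> cr (inY f) d = false.
Proof.
move=> dF df.
have eG : edge d \in F :\ f by rewrite !inE df.
have c1 : connect (dual_rel (F :\ f)) d (alpha d).
  by apply: connect1; rewrite /dual_rel eqxx eG orbT.
have c2 := dual_sym wf c1.
rewrite /cr; have -> : inY f (alpha d) = inY f d.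
  by rewrite /inY; congr negb; apply/idP/idP; apply: reach_conn.
by rewrite addbb.
Qed.

Lemma split_conn f d a b : edge d = f -> connect (dual_rel F) a b ->
  [\/ connect (dual_rel (F :\ f)) a b, connect (dual_rel (F :\ f)) d b |
      connect (dual_rel (F :\ f)) (alpha d) b].
Proof.
move=> edf /connectP[p pth ->] {b}.
elim: p a pth => [|c p IH] a /=; first by move=> _; apply: Or31; rewrite connect0.
case/andP=> st /IH.
case st' : (dual_rel (F :\ f) a c).
  case=> h; [apply: Or31 | apply: Or32 | apply: Or33] => //.
  exact: connect_trans (connect1 st') h.
move: st st'; rewrite /dual_rel !inE.
case: (phi a == c) => //= /andP[/eqP ac aF]. rewrite ac eqxx aF andbT /= => /negbFE/eqP ef.
have: edge d = edge a by rewrite ef edf.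
case/(edge_eq wf) => Ea; subst a c.
  by case=> h; [apply: Or33 | apply: Or32 | apply: Or33].
by rewrite (alphaK wf) => -[h|h|h]; [apply: Or32 | apply: Or32 | apply: Or33].
Qed.

Lemma FF2 d : edge d \in F -> cr (inY (edge d)) d = true.
Proof.
move=> dF; case: tc => [[Tconn Tacyc] [Freach Facyc Fbnd] TF0].
set G := F :\ edge d.
have least : reach_bnd G d || reach_bnd G (alpha d).
  have /existsP[b /andP[bb cb]] := Freach d.
  have hb : reach_bnd G b by apply: reach_bnd_self.
  case: (split_conn (erefl (edge d)) cb) => h.
  - by rewrite (reach_conn h hb).
  - by rewrite (reach_conn h hb).
  - by rewrite (reach_conn h hb) orbT.
have most : ~~ (reach_bnd G d && reach_bnd G (alpha d)).
  apply/negP => /andP[/existsP[b1 /andP[bb1 c1]] /existsP[b2 /andP[bb2 c2]]].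
  have sGF : G \subset F by apply: subD1set.
  have stF : connect (dual_rel F) d (alpha d).
    by apply: connect1; rewrite /dual_rel eqxx dF orbT.
  have cF : connect (dual_rel F) b1 b2.
    apply: connect_trans (dual_sym wf (dual_mono sGF c1)) _.
    exact: connect_trans stF (dual_mono sGF c2).
  have := Fbnd _ _ bb1 bb2 cF => fc.
  have cG : connect (dual_rel G) b1 b2.
    by apply: connect_sub fc => x y /eqP <-; apply: connect1; rewrite /dual_rel eqxx.
  move: (Facyc d dF) => /negP; apply.
  apply: connect_trans c1 _; apply: connect_trans cG _; exact: (dual_sym wf c2).
rewrite /cr /inY -/G.
by move: least most; case: (reach_bnd G d); case: (reach_bnd G (alpha d)).
Qed.

Lemma dp_alpha d : dual_path F (alpha d) = dual_path F d.
Proof.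
apply/setP => e; rewrite /dual_path !inE (edge_alpha wf) (alphaK wf).
by case: (e == _); case: (e \in F); case: (reach_bnd _ d); case: (reach_bnd _ (alpha d)).
Qed.

Lemma dp_mem e d : (e \in dual_path F d) = (e == edge d) (+) ((e \in F) && cr (inY e) d).
Proof.
rewrite /dual_path /rootpath !inE /cr /inY.
by case: (e \in F) => //=; rewrite ?addbA ?addbF.
Qed.

Lemma sig_mem l e d : edge d = l -> l \in Lset T F ->
  (l \in signature T F e) = (e \in dual_path F d).
Proof.
move=> dl Ll; rewrite /signature inE Ll /=.
rewrite (exists_edge wf (P := fun d' => e \in dual_path F d')); last by move=> a; rewrite dp_alpha.
by rewrite -dl; case: (rep_edge wf d) => ->; rewrite ?dp_alpha.
Qed.

Section WithC.
Variable C : {set E}.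
Hypothesis HL : forall l, l \in Lset T F ->
  \big[addb/false]_(e : E) ((e \in C) && (l \in signature T F e)) = false.
Hypothesis HS : forall S : D -> bool, (forall a, S (Defs.rot a) = S a) ->
  \big[addb/false]_(e : E) ((e \in C) && cr S (rep wf e)) = false.

Definition Phi d := \big[addb/false]_(f : E) ((f \in C) && (f \in F) && cr (inY f) d).

Lemma Phi_F d : edge d \in F -> Phi d = (edge d \in C).
Proof.
move=> dF; rewrite /Phi (bigD1 (edge d)) //= FF2 // dF !andbT big1 ?addbF // => f nf.
case fF: (f \in F); last by rewrite andbF.
by rewrite FF1 // ?andbF // eq_sym.
Qed.

Lemma Phi_L d : edge d \in Lset T F -> Phi d = (edge d \in C).
Proof.
move=> Ld; have := HL Ld.
rewrite (eq_bigr (fun e => ((e == edge d) && (e \in C)) (+) ((e \in C) && (e \in F) && cr (inY e) d))); last first.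
  move=> e _; rewrite (sig_mem e (erefl (edge d))) // dp_mem andb_addr.
  by case: (e == edge d); case: (e \in C).
rewrite big_split /= xor_pred1 -/(Phi d).
by case: (edge d \in C); case: (Phi d).
Qed.

Lemma Phi_nT d : edge d \notin T -> Phi d = (edge d \in C).
Proof.
move=> nT; case dF: (edge d \in F); first exact: Phi_F.
by apply: Phi_L; rewrite /Lset !inE (negbTE nT) dF.
Qed.

Lemma Phi_T d : edge d \in T -> Phi d = (edge d \in C).
Proof.
move=> dT; case: tc => [[Tconn Tacyc] [Freach Facyc Fbnd] TF0].
set t := edge d.
pose S a := connect (primal_rel (T :\ t)) d a.
have HSrot : forall a, S (Defs.rot a) = S a.
  move=> a; apply/idP/idP => h.
    apply: connect_trans h _.
    by apply: connect_sub (rot_back wf a) => x y /eqP <-; apply: connect1; rewrite /primal_rel eqxx.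
  by apply: connect_trans h (connect1 _); rewrite /primal_rel eqxx.
have crt : cr S (rep wf t) = true.
  rewrite /t (rep_inv wf (cr_alpha wf S)) /cr /S connect0.
  by rewrite (negbTE (Tacyc d dT)).
have crT : forall e, e \in T -> e != t -> cr S (rep wf e) = false.
  move=> e eT et.
  have eG : edge (rep wf e) \in T :\ t by rewrite !inE (repP wf) et eT.
  have c1 : connect (primal_rel (T :\ t)) (rep wf e) (alpha (rep wf e)).
    by apply: connect1; rewrite /primal_rel eqxx eG orbT.
  have c2 := primal_sym wf c1.
  rewrite /cr /S.
  have -> : connect (primal_rel (T :\ t)) d (alpha (rep wf e)) = connect (primal_rel (T :\ t)) d (rep wf e).
    by apply/idP/idP => h; apply: connect_trans h _.
  by rewrite addbb.
have key : forall e, ((e \notin T) && cr S (rep wf e)) = cr S (rep wf e) (+) (e == t).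
  move=> e; case eT: (e \in T) => /=.
    case et: (e == t); first by rewrite (eqP et) crt.
    by rewrite crT // et.
  have -> : (e == t) = false by apply/negbTE; apply: contraFN eT => /eqP ->.
  by rewrite addbF.
have H := HS HSrot.
have E1 : \big[addb/false]_(e : E) ((e \in C) && cr S (rep wf e)) =
    (t \in C) (+) \big[addb/false]_(e : E) ((e \notin T) && cr S (rep wf e) && Phi (rep wf e)).
  rewrite (eq_bigr (fun e => ((e == t) && (e \in C)) (+) ((e \notin T) && cr S (rep wf e) && Phi (rep wf e)))); last first.
    move=> e _; case eT: (e \in T) => /=.
      rewrite addbF; case et: (e == t); first by rewrite (eqP et) crt andbT.
      by rewrite crT // ?et ?andbF.
    rewrite Phi_nT ?(repP wf) ?eT //.
    have -> : (e == t) = false by apply/negbTE; apply: contraFN eT => /eqP ->.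
    by rewrite andbC.
  by rewrite big_split /= xor_pred1.
have E2 : \big[addb/false]_(e : E) ((e \notin T) && cr S (rep wf e) && Phi (rep wf e)) = Phi d.
  rewrite {2}/Phi.
  rewrite (eq_bigr (fun e => \big[addb/false]_(f : E) (((f \in C) && (f \in F)) &&
             (((e \notin T) && cr S (rep wf e)) && cr (inY f) (rep wf e))))); last first.
    move=> e _; rewrite /Phi andb_xorr; apply: eq_bigr => f _.
    by case: ((e \notin T) && _); case: ((f \in C) && _).
  rewrite exchange_big /=; apply: eq_bigr => f _; rewrite -andb_xorr; congr andb.
  rewrite (eq_bigr (fun e => (cr S (rep wf e) && cr (inY f) (rep wf e)) (+) ((e == t) && cr (inY f) (rep wf e)))); last first.
    by move=> e _; rewrite key andb_addl.
  rewrite big_split /= xor_pred1 (cross_even wf HSrot (inY_phi f)) /=.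
  by rewrite /t (rep_inv wf (cr_alpha wf (inY f))).
move: H; rewrite E1 E2.
by case: (t \in C); case: (Phi d).
Qed.

Lemma Phi_all d : Phi d = (edge d \in C).
Proof. by case dT: (edge d \in T); [apply: Phi_T | apply: Phi_nT; rewrite dT]. Qed.

Definition col x := \big[addb/false]_(f : E) ((f \in C) && (f \in F) && inY f x).

Lemma col_cr d : col d (+) col (alpha d) = Phi d.
Proof.
rewrite /col /Phi -big_split /=; apply: eq_bigr => f _.
by rewrite /cr -andb_addr.
Qed.

Lemma C_boundary : boundary_subgraph C.
Proof.
exists [set x | col x]; split.
- move=> d; rewrite !inE /col; apply: eq_bigr => f _; by rewrite inY_phi.
- move=> d; rewrite inE; apply: contraTN => bd.
  rewrite /col big1 // => f _; by rewrite /inY reach_bnd_self ?andbF.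
- apply/setP => e; rewrite inE; apply/idP/existsP => [eC|[d /andP[/eqP de]]].
    exists (rep wf e); rewrite (repP wf) eqxx !inE /=.
    have := col_cr (rep wf e); rewrite Phi_all (repP wf) eC.
    by case: (col _); case: (col _).
  rewrite !inE => ne; have := col_cr d; rewrite Phi_all de => <-.
  by move: ne; case: (col _); case: (col _).
Qed.

End WithC.
End LA.

Definition wsig (m : cmap) (T F : {set cE m}) (s : seq (cD m)) : {set cE m} :=
  [set l | \big[addb/false]_(a <- s) (l \in signature T F (edge a))].

Section LC.
Variable m : cmap.
Hypothesis wf : wf_cmap m.
Local Notation D := (cD m).
Local Notation V := (cV m).
Local Notation E := (cE m).

Lemma odd_sum (s : seq D) (q : E -> bool) :
  \big[addb/false]_(a <- s) q (edge a) = \big[addb/false]_(e : E) ((e \in odd_edges s) && q e).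
Proof.
elim: s => [|a s IH].
  by rewrite big_nil big1 // => e _; rewrite inE.
rewrite big_cons IH.
rewrite [RHS](eq_bigr (fun e => ((e == edge a) && q e) (+) ((e \in odd_edges s) && q e))); last first.
  by move=> e _; rewrite !inE /= oddD oddb andb_addl eq_sym.
by rewrite big_split /= xor_pred1.
Qed.

Lemma odd_cat (s1 s2 : seq D) e :
  (e \in odd_edges (s1 ++ s2)) = (e \in symd (odd_edges s1) (odd_edges s2)).
Proof. by rewrite in_symd !inE count_cat oddD. Qed.

Lemma rot_closed (S : D -> bool) : (forall a, S (Defs.rot a) = S a) ->
  forall a b, fconnect (@Defs.rot m) a b -> S a = S b.
Proof.
move=> HS a _ /connectP[p pth ->].
elim: p a pth => [|c p IH] a //= /andP[/eqP <- pth].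
by rewrite -IH // HS.
Qed.

Lemma walk_cross (S : D -> bool) : (forall a, S (Defs.rot a) = S a) ->
  forall x s y, walk (@tail m) (@dhead m) x s y ->
  \big[addb/false]_(a <- s) cr S a =
  [exists a, (tail a == x) && S a] (+) [exists a, (tail a == y) && S a].
Proof.
move=> HS.
have Sv : forall a, S a = [exists a', (tail a' == tail a) && S a'].
  move=> a; apply/idP/existsP => [Sa|[a' /andP[/eqP ta Sa']]]; first by exists a; rewrite eqxx.
  by rewrite -(rot_closed HS (iffLR (tail_iff wf a' a) ta)).
move=> x s; elim: s x => [|a s IH] x y /=.
  by move/eqP => <-; rewrite big_nil addbb.
case/andP=> /eqP ax /IH IHs; rewrite big_cons IHs /cr Sv [S (alpha a)]Sv ax.
by rewrite /dhead addbA -[X in X (+) _]addbA addbb addbF.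
Qed.

Variables T F : {set E}.
Hypothesis tc : tree_coforest T F.

Lemma homA u1 s1 u2 s2 : is_cycle u1 s1 -> is_cycle u2 s2 ->
  wsig T F s1 = wsig T F s2 -> homologous s1 s2.
Proof.
move=> c1 c2 ws; apply: (@C_boundary m wf T F tc).
- move=> l _.
  have : \big[addb/false]_(a <- s1 ++ s2) (l \in signature T F (edge a)) = false.
    rewrite big_cat /=.
    by move/setP: ws => /(_ l); rewrite !inE => ->; rewrite addbb.
  rewrite (odd_sum (s1 ++ s2) (fun e => l \in signature T F e)) => Hx; rewrite -[RHS]Hx; apply: eq_bigr => e _; by rewrite odd_cat.
- move=> S HS.
  have : \big[addb/false]_(a <- s1 ++ s2) cr S a = false.
    by rewrite big_cat /= (walk_cross HS c1) (walk_cross HS c2) !addbb.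
  rewrite (eq_bigr (fun a => cr S (rep wf (edge a)))); last first.
    by move=> a _; rewrite (rep_inv wf (cr_alpha wf S)).
  rewrite (odd_sum (s1 ++ s2) (fun e => cr S (rep wf e))) => Hx; rewrite -[RHS]Hx; apply: eq_bigr => e _; by rewrite odd_cat.
Qed.

End LC.

Lemma Pinv (m : cmap) (wf : wf_cmap m) (X : {set cD m}) :
  forall a, ((alpha a \in X) != (alpha (alpha a) \in X)) = ((a \in X) != (alpha a \in X)).
Proof. by move=> a; rewrite (alphaK wf) eq_sym. Qed.

Lemma hom_trans (m : cmap) (wf : wf_cmap m) (s1 s2 s3 : seq (cD m)) :
  homologous s1 s2 -> homologous s2 s3 -> homologous s1 s3.
Proof.
move=> [X1 [p1 b1 E1]] [X2 [p2 b2 E2]].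
exists [set d | (d \in X1) (+) (d \in X2)]; split.
- by move=> d; rewrite !inE p1 p2.
- move=> d; rewrite inE; case d1: (d \in X1); first by move=> _; apply: b1.
  by move=> /= d2; apply: b2.
- apply/setP => e.
  have -> : e \in symd (odd_edges s1) (odd_edges s3) =
     (e \in symd (odd_edges s1) (odd_edges s2)) (+) (e \in symd (odd_edges s2) (odd_edges s3)).
    rewrite !in_symd; by case: (e \in odd_edges s1); case: (e \in odd_edges s2); case: (e \in odd_edges s3).
  rewrite E1 E2 !inE.
  rewrite (exists_edge wf (Pinv wf X1)) (exists_edge wf (Pinv wf X2)).
  rewrite (exists_edge wf (P := fun d => (d \in [set d | (d \in X1) (+) (d \in X2)]) !=
                                   (alpha d \in [set d | (d \in X1) (+) (d \in X2)]))); last first.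
    by move=> a; rewrite !inE (alphaK wf) eq_sym.
  rewrite !inE.
  by case: (rep wf e \in X1); case: (rep wf e \in X2); case: (alpha (rep wf e) \in X1);
     case: (alpha (rep wf e) \in X2).
Qed.

Section Cov.
Variable m : cmap.
Local Notation D := (cD m).
Local Notation V := (cV m).
Local Notation E := (cE m).
Variables T F : {set E}.

Lemma memw s l : (l \in wsig T F s) = \big[addb/false]_(a <- s) (l \in signature T F (edge a)).
Proof. by rewrite /wsig inE. Qed.

Lemma wsig_cons a s : wsig T F (a :: s) = symd (signature T F (edge a)) (wsig T F s).
Proof. by apply/setP => l; rewrite in_symd !memw big_cons. Qed.

Lemma wsig_nil : wsig T F [::] = set0.
Proof. by apply/setP => l; rewrite memw big_nil inE. Qed.

Lemma symdA (A B C : {set E}) : symd (symd A B) C = symd A (symd B C).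
Proof. by apply/setP => l; rewrite !in_symd addbA. Qed.

Lemma symd0 (A : {set E}) : symd A set0 = A.
Proof. by apply/setP => l; rewrite !in_symd inE addbF. Qed.

Lemma symd_cancel (h A B : {set E}) : symd h A = symd h B -> A = B.
Proof.
move/setP => H; apply/setP => l; move: (H l); rewrite !in_symd.
by case: (l \in h); case: (l \in A); case: (l \in B).
Qed.

Lemma wsig_perm s s' : perm_eq s s' -> wsig T F s = wsig T F s'.
Proof. by move=> pe; apply/setP => l; rewrite !memw (perm_big _ pe). Qed.

Lemma lift_walk h u s v : walk (@tail m) (@dhead m) u s v ->
  walk (@csrc m) (ctgt T F) (u, h) (cover_lift T F h s) (v, symd h (wsig T F s)).
Proof.
elim: s u h => [|a s IH] u h /=.
  by move/eqP => ->; rewrite wsig_nil symd0 eqxx.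
case/andP => /eqP au ws; rewrite /csrc /= au eqxx /=.
by rewrite wsig_cons -symdA; apply: IH.
Qed.

Lemma proj_walk (z : V * {set E}) s t :
  walk (@csrc m) (ctgt T F) z s t ->
  [/\ walk (@tail m) (@dhead m) z.1 (map fst s) t.1,
      t.2 = symd z.2 (wsig T F (map fst s)) &
      cover_lift T F z.2 (map fst s) = s].
Proof.
elim: s z => [|[a h'] s IH] [u h] /=.
  by move/eqP => <-; rewrite wsig_nil symd0 eqxx.
rewrite /csrc /= => /andP[/eqP [au hh] ws].
have [w1 w2 w3] := IH _ ws; rewrite /= in w1 w2 w3.
split; first by rewrite au eqxx.
  by rewrite w2 wsig_cons -symdA hh.
by rewrite -hh w3.
Qed.

Lemma map_fst_lift h s : map fst (cover_lift T F h s) = s.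
Proof. by elim: s h => [|a s IH] h //=; rewrite IH. Qed.

Lemma verts_proj (x : V) (h : {set E}) (s : seq D) :
  map fst (verts (ctgt T F) (x, h) (cover_lift T F h s)) = verts (@dhead m) x s.
Proof.
rewrite /Defs.verts /=; congr cons.
elim: s h => [|a s IH] h //=; by rewrite IH.
Qed.

Lemma lift_labels (x : V) (h : {set E}) (s : seq D) : h \subset Lset T F ->
  all (fun z : V * {set E} => z.2 \subset Lset T F) (verts (ctgt T F) (x, h) (cover_lift T F h s)).
Proof.
rewrite /Defs.verts /= => hL; rewrite hL /=.
elim: s x h hL => [|a s IH] x h hL //=.
have hL' : symd h (signature T F (edge a)) \subset Lset T F.
  apply/subsetP => l; rewrite in_symd; case lh: (l \in h).
    by move=> _; apply: (subsetP hL).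
  by rewrite /= /signature inE => /andP[].
by rewrite hL' /= (IH (dhead a)).
Qed.

Variables (R : realType) (w : E -> R).
Hypothesis w0 : forall e, (0 <= w e)%R.

Lemma clen_len s : clen w s = len w (map fst s).
Proof. by rewrite /clen /len big_map. Qed.

Lemma len_lift h s : clen w (cover_lift T F h s) = len w s.
Proof. by rewrite clen_len map_fst_lift. Qed.

Lemma clen_subseq s t : subseq s t -> (clen w s <= clen w t)%R.
Proof.
rewrite /clen; elim: t s => [|b t IH] s.
  by rewrite subseq0 => /eqP ->.
case: s => [|a s] H.
  by rewrite big_nil; apply: sumr_ge0 => *; exact: w0.
move: H => /=; case: eqP => [-> /IH H|_ /IH H].
  by rewrite !big_cons lerD2l.
apply: le_trans H _; rewrite big_cons lerDr; exact: w0.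
Qed.

Lemma len_cat s1 s2 : len w (s1 ++ s2) = (len w s1 + len w s2)%R.
Proof. by rewrite /len big_cat. Qed.

Lemma len_perm s s' : perm_eq s s' -> len w s = len w s'.
Proof. by move=> pe; rewrite /len (perm_big _ pe). Qed.

Lemma len_ge0 s : (0 <= len w s)%R.
Proof. by rewrite /len big_seq sumr_ge0. Qed.

End Cov.

Unset Implicit Arguments. Set Strict Implicit. Set Printing Implicit Defensive.
Local Open Scope ring_scope.

Lemma clen_cat (R : realType) (m : cmap) (w : cE m -> R) s1 s2 :
  clen w (s1 ++ s2) = clen w s1 + clen w s2.
Proof. by rewrite /clen big_cat. Qed.

Lemma size_lift (m : cmap) (T F : {set cE m}) h (s : seq (cD m)) :
  size (cover_lift T F h s) = size s.
Proof. by rewrite -(size_map fst) map_fst_lift. Qed.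

Theorem lemma5p4 (R : realType) (m : cmap) (w : cE m -> R) :
  wf_cmap m ->
  (forall e, 0 <= w e) ->
  forall T F : {set cE m}, tree_coforest T F ->
  forall (u : cV m) (g : seq (cD m)), Z2_minimal w u g ->
  forall (x y : cV m) (p : seq (cD m)), shortest_path w x p y ->
  has (fun v => v \in verts (@dhead m) u g) (verts (@dhead m) x p) ->
  exists (u' : cV m) (g' : seq (cD m)) (h : {set cE m}),
    [/\ h \subset Lset T F,
        Z2_minimal w u' g',
        homologous g g',
        cshortest_path w T F (u', h) (cover_lift T F h g')
          (last (u', h) (map (ctgt T F) (cover_lift T F h g'))) &
        starts_with_subpath_only T F (x, set0) (cover_lift T F set0 p)
          (u', h) (cover_lift T F h g')].
Proof.
move=> wf w0 T F tc u g [gcyc gmin] x y p [/andP[pwalk puniq] pshort] hhas.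
set i := find (fun v => v \in verts (@dhead m) u g) (verts (@dhead m) x p).
have ilt : (i < size (verts (@dhead m) x p))%N by rewrite -has_find.
have vin : nth x (verts (@dhead m) x p) i \in verts (@dhead m) u g := nth_find x hhas.
set v := nth x (verts (@dhead m) x p) i.
have ile : (i <= size p)%N by move: ilt; rewrite /verts /= size_map ltnS.
have [gv [gvw gvp gvsub]] := rotate gcyc vin.
set sp := cover_lift T F set0 p.
set S0 := verts (ctgt T F) (x, set0) sp.
have spw := lift_walk T F set0 pwalk.
have S0proj : map fst S0 = verts (@dhead m) x p := verts_proj T F x set0 p.
have S0uniq : uniq S0 by apply: (map_uniq (f := fst)); rewrite S0proj.
have S0size : size S0 = (size p).+1 by rewrite -(size_map fst) S0proj /verts /= size_map.
set z0 := nth (x, set0) S0 i.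
have z0in : z0 \in S0 by apply: mem_nth; rewrite S0size ltnS.
have z0v : z0.1 = v by rewrite /v -S0proj (nth_map (x, set0)) // S0size ltnS.
set h := z0.2.
have z0E : z0 = (v, h) by rewrite -z0v [LHS]surjective_pairing.
set c := wsig T F gv.
set P := cover_lift T F h gv.
have Pw := lift_walk T F h gvw; rewrite -/P -/c in Pw.
have [s1 [s2 [PE A2 H1]]] := split_last (ctgt T F) (fun t => t \in S0) (v, h) P.
set z := last (v, h) (map (ctgt T F) s1).
have zin : z \in S0 by case: H1 => [E0|//]; rewrite /z E0 /= -z0E.
have [w1 w2] : walk (@csrc m) (ctgt T F) (v, h) s1 z /\ walk (@csrc m) (ctgt T F) z s2 (v, symd h c).
  by move: Pw; rewrite PE walk_cat => /andP[].
have zP : z \in verts (ctgt T F) (v, h) P by rewrite PE verts_cat mem_cat last_in_verts.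
have z1g : z.1 \in verts (@dhead m) u g.
  apply: gvsub; rewrite -(verts_proj T F v h gv) -/P; exact: map_f.
set k := index z S0.
have klt : (k < size S0)%N by rewrite index_mem.
have zk : nth (x, set0) S0 k = z by rewrite nth_index.
have z1k : z.1 = nth x (verts (@dhead m) x p) k by rewrite -zk -S0proj (nth_map (x, set0)).
have ik : (i <= k)%N.
  rewrite leqNgt; apply/negP => ki.
  by have := before_find x ki; rewrite -z1k z1g.
have kle : (k <= size p)%N by rewrite -ltnS -S0size.
have ile' : (i <= size sp)%N by rewrite size_lift.
have [_ dw] := walk_take_drop spw ile'.
have kile : (k - i <= size (drop i sp))%N by rewrite size_drop size_lift leq_sub2r.
have [aw _] := walk_take_drop dw kile.
have aend : nth (nth (x, set0) (verts (ctgt T F) (x, set0) sp) i)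
    (verts (ctgt T F) (nth (x, set0) (verts (ctgt T F) (x, set0) sp) i) (drop i sp)) (k - i) = z.
  rewrite verts_drop // -/S0 nth_drop subnKC // -zk; apply: set_nth_default => //.
rewrite aend -/S0 -/z0 z0E in aw.
set a := take (k - i) (drop i sp).
have [b' [bw bu bsub]] := shortcut w2.
set Q := a ++ b'.
have Qw : walk (@csrc m) (ctgt T F) (v, h) Q (v, symd h c) := walk_catP aw bw.
set g' := map fst Q.
have [gw' gsig' glift'] := proj_walk Qw; rewrite /= -/g' in gw' gsig' glift'.
have wsg' : wsig T F g' = c by apply: (symd_cancel (h := h)); rewrite -gsig'.
have wsg : wsig T F g = c := wsig_perm T F gvp.
have hgg' : homologous g g' by apply: (homA wf tc gcyc gw'); rewrite wsg wsg'.
have lenP : clen w s1 + clen w s2 = len w g.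
  by rewrite -clen_cat -PE /P len_lift (len_perm w gvp).
have lena : clen w a <= clen w s1.
  have [pw1 _] := walk_take_drop pwalk ile.
  have [_ pw3] := walk_take_drop pwalk kle.
  have [s1w _ _] := proj_walk w1; rewrite /= z1k in s1w.
  have Wk := walk_catP pw1 (walk_catP s1w pw3).
  have := pshort _ Wk; rewrite !len_cat.
  have -> : len w p = len w (take i p) + len w (map fst a) + len w (drop k p).
    rewrite /a map_take map_drop map_fst_lift -len_cat -len_cat.
    by rewrite -{1}(cat_take_drop i p) -{1}(cat_take_drop (k - i) (drop i p)) drop_drop subnK // catA.
  by rewrite !clen_len -addrA lerD2l lerD2r.
have lenb : clen w b' <= clen w s2 := clen_subseq w0 bsub.
have lenQ : len w g' <= len w g.
  by rewrite /g' -clen_len /Q clen_cat -lenP lerD.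
have gmin' : Z2_minimal w v g'.
  split => // u2 s3 c3 hom3; apply: le_trans lenQ _; apply: gmin c3 _.
  exact: (hom_trans wf hgg' hom3).
have aS0 : forall t, t \in verts (ctgt T F) (v, h) a -> t \in S0.
  move=> t; rewrite -z0E /a verts_take /z0 verts_drop // -/S0 => /mem_take.
  exact: mem_drop.
have bS0 : forall t, t \in map (ctgt T F) b' -> t \notin S0.
  move=> t tb; have := allP A2 t (mem_subseq (map_subseq _ bsub) tb); done.
exists v, g', h; rewrite glift'.
have lastQ : last (v, h) (map (ctgt T F) Q) = (v, symd h c) by rewrite -(walk_last Qw).
split.
- by have := @lift_labels m T F x set0 p (sub0set _); move/allP/(_ _ z0in).
- exact: gmin'.
- exact: hgg'.
- rewrite lastQ; split => //.
    rewrite /Q verts_cat cat_uniq; apply/and3P; split.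
    + rewrite -z0E /a verts_take /z0 verts_drop // -/S0.
      by apply: take_uniq; apply: drop_uniq.
    + apply/hasPn => t tb; apply/negP => ta.
      by move: (bS0 t tb); rewrite (aS0 t ta).
    + by move: bu; rewrite /verts /= => /andP[].
  move=> s'' ws''.
  have [pw'' ps'' _] := proj_walk ws''; rewrite /= in pw'' ps''.
  have wss : wsig T F (map fst s'') = c by apply: (symd_cancel (h := h)); rewrite -ps''.
  have := gmin _ _ pw'' (homA wf tc gcyc pw'' (etrans wsg (esym wss))).
  rewrite -clen_len -clen_len in lenQ *.
  move=> H; exact: (le_trans lenQ H).
- split; first by rewrite -z0E.
  exists a, b'; split => //.
    by apply: (infix_trans (infix_take _ _)); exact: infix_drop.
  by apply/allP => t tb; apply: bS0.
Qed.
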